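(* Let $X, Y \subseteq \omega$. There exists a non-order-reversing embedding $f : \mathcal{G}^X \to \mathcal{G}^Y$ if and only if $X \le_e Y$.
   Context: A pca is a set with a partial binary application operation containing distinct $\mathrm{s},\mathrm{k}$ with $\mathrm{k}ab\downarrow=a$, $\mathrm{s}ab\downarrow$, $\mathrm{s}abc\simeq(ac)(bc)$. An embedding of pcas is an injective map $f$ with: if $ab$ is defined then $f(a)f(b)$ is defined and equals $f(ab)$. Scott's graph model: on $\mathcal{P}(\omega)$, $A\cdot B=\{n:\exists u\,(\langle n,u\rangle\in A\wedge D_u\subseteq B)\}$, with $\langle\cdot,\cdot\rangle$ a bijective computable pairing, $\langle 0,0\rangle=0$, and $D_u$ the finite set with canonical code $u$. $\mathcal{G}^Z$ is the least class containing $Z$ and all c.e. sets and closed under this application (equivalently, all sets $\le_e Z$), a pca. $A\le_e Z$ means there is a c.e. relation $R$ with $x\in A\iff\exists u\,(R(x,u)\wedge D_u\subseteq Z)$. An embedding $f:\mathcal{G}^X\to\mathcal{G}^Y$ is order-reversing if for all $A,B\in\mathcal{G}^X$ with $A\subseteq B$ we have $f(B)\subseteq f(A)$. *)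

(* Defs.v *)
From Stdlib Require Import Arith List.
Import ListNotations.

Inductive PR : Type :=
| PR_zero : PR
| PR_succ : PR
| PR_proj : nat -> PR
| PR_comp : PR -> list PR -> PR
| PR_prec : PR -> PR -> PR
| PR_mu   : PR -> PR.

Inductive eval : PR -> list nat -> nat -> Prop :=
| ev_zero v : eval PR_zero v 0
| ev_succ x v : eval PR_succ (x :: v) (S x)
| ev_proj i v : eval (PR_proj i) v (nth i v 0)
| ev_comp f gs v ws y :
    evals gs v ws -> eval f ws y -> eval (PR_comp f gs) v y
| ev_prec0 f g v y : eval f v y -> eval (PR_prec f g) (0 :: v) y
| ev_precS f g n v r y :
    eval (PR_prec f g) (n :: v) r -> eval g (n :: r :: v) y ->
    eval (PR_prec f g) (S n :: v) y
| ev_mu f v n :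
    eval f (n :: v) 0 ->
    (forall m, m < n -> exists k, eval f (m :: v) (S k)) ->
    eval (PR_mu f) v n
with evals : list PR -> list nat -> list nat -> Prop :=
| evs_nil v : evals [] v []
| evs_cons g gs v w ws :
    eval g v w -> evals gs v ws -> evals (g :: gs) v (w :: ws).

Definition ce (A : nat -> Prop) : Prop :=
  exists e : PR, forall x, A x <-> exists y, eval e [x] y.

Definition ce_rel (R : nat -> nat -> Prop) : Prop :=
  exists e : PR, forall x u, R x u <-> exists y, eval e [x; u] y.

Definition pair (x y : nat) : nat := (x + y) * (x + y + 1) / 2 + y.

Definition D (u : nat) (i : nat) : Prop := Nat.testbit u i = true.

Definition subset (A B : nat -> Prop) : Prop := forall n, A n -> B n.

Definition gapp (A B : nat -> Prop) : nat -> Prop :=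
  fun n => exists u, A (pair n u) /\ subset (D u) B.

Inductive inG (Z : nat -> Prop) : (nat -> Prop) -> Prop :=
| G_base A : (forall n, A n <-> Z n) -> inG Z A
| G_ce A : ce A -> inG Z A
| G_app A B C : inG Z B -> inG Z C -> (forall n, A n <-> gapp B C n) -> inG Z A.

Definition enum_le (A Z : nat -> Prop) : Prop :=
  exists R, ce_rel R /\ forall x, A x <-> exists u, R x u /\ subset (D u) Z.

(* embedding of pcas G^X -> G^Y (application in G is total) *)
Definition embedding (X Y : nat -> Prop) (f : (nat -> Prop) -> (nat -> Prop)) : Prop :=
  (forall A, inG X A -> inG Y (f A)) /\
  (forall A B, inG X A -> inG X B -> f A = f B -> A = B) /\
  (forall A B, inG X A -> inG X B -> f (gapp A B) = gapp (f A) (f B)).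

Definition order_reversing (X : nat -> Prop) (f : (nat -> Prop) -> (nat -> Prop)) : Prop :=
  forall A B, inG X A -> inG X B -> subset A B -> subset (f B) (f A).

(* Main.v *)
Require Import Defs.
From Stdlib Require Import Arith List Lia PeanoNat Bool.
From Stdlib Require Import FunctionalExtensionality PropExtensionality Classical.
Import ListNotations.


Fixpoint PR_ind2 (P : PR -> Prop) (Hz : P PR_zero) (Hs : P PR_succ)
  (Hp : forall i, P (PR_proj i))
  (Hc : forall f gs, P f -> Forall P gs -> P (PR_comp f gs))
  (Hr : forall f g, P f -> P g -> P (PR_prec f g))
  (Hm : forall f, P f -> P (PR_mu f)) (e : PR) {struct e} : P e :=
  match e with
  | PR_zero => Hz | PR_succ => Hs | PR_proj i => Hp i
  | PR_comp f gs => Hc f gs (PR_ind2 P Hz Hs Hp Hc Hr Hm f)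
      ((fix F (l : list PR) : Forall P l :=
          match l with [] => Forall_nil _
          | g :: l' => Forall_cons _ (PR_ind2 P Hz Hs Hp Hc Hr Hm g) (F l') end) gs)
  | PR_prec f g => Hr f g (PR_ind2 P Hz Hs Hp Hc Hr Hm f) (PR_ind2 P Hz Hs Hp Hc Hr Hm g)
  | PR_mu f => Hm f (PR_ind2 P Hz Hs Hp Hc Hr Hm f)
  end.

Inductive ex : Type :=
| EV : nat -> ex
| EZ : ex
| ES : ex -> ex
| ECall : ex -> list ex -> ex
| ERec : ex -> ex -> ex -> ex.

Fixpoint ex_ind2 (P : ex -> Prop) (Hv : forall i, P (EV i)) (Hz : P EZ)
  (Hs : forall a, P a -> P (ES a))
  (Hc : forall f args, P f -> Forall P args -> P (ECall f args))
  (Hr : forall n b s, P n -> P b -> P s -> P (ERec n b s)) (x : ex) {struct x} : P x :=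
  match x with
  | EV i => Hv i | EZ => Hz | ES a => Hs a (ex_ind2 P Hv Hz Hs Hc Hr a)
  | ECall f args => Hc f args (ex_ind2 P Hv Hz Hs Hc Hr f)
      ((fix F (l : list ex) : Forall P l :=
          match l with [] => Forall_nil _
          | g :: l' => Forall_cons _ (ex_ind2 P Hv Hz Hs Hc Hr g) (F l') end) args)
  | ERec n b s => Hr n b s (ex_ind2 P Hv Hz Hs Hc Hr n) (ex_ind2 P Hv Hz Hs Hc Hr b)
                    (ex_ind2 P Hv Hz Hs Hc Hr s)
  end.

Fixpoint iterR (b : nat) (st : nat -> nat -> nat) (k : nat) : nat :=
  match k with 0 => b | S k' => st k' (iterR b st k') end.

Fixpoint den (env : list nat) (x : ex) : nat :=
  match x with
  | EV i => nth i env 0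
  | EZ => 0
  | ES a => S (den env a)
  | ECall f args => den (map (den env) args) f
  | ERec n b s => iterR (den env b) (fun k r => den (k :: r :: env) s) (den env n)
  end.

Fixpoint cmp (L : nat) (x : ex) : PR :=
  match x with
  | EV i => PR_proj i
  | EZ => PR_zero
  | ES a => PR_comp PR_succ [cmp L a]
  | ECall f args => PR_comp (cmp (length args) f) (map (cmp L) args)
  | ERec n b s => PR_comp (PR_prec (cmp L b) (cmp (S (S L)) s))
                          (cmp L n :: map PR_proj (seq 0 L))
  end.

Lemma map_nth_seq_app : forall v pre,
  map (fun i => nth i (pre ++ v) 0) (seq (length pre) (length v)) = v.
Proof.
  induction v as [|x v IH]; intros pre; simpl; auto.
  rewrite nth_middle. f_equal.
  replace (pre ++ x :: v) with ((pre ++ [x]) ++ v) by (rewrite <- app_assoc; auto).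
  replace (S (length pre)) with (length (pre ++ [x])) by (rewrite length_app; simpl; lia).
  apply IH.
Qed.

Lemma map_nth_seq : forall v, map (fun i => nth i v 0) (seq 0 (length v)) = v.
Proof. intros v. apply (map_nth_seq_app v []). Qed.

Lemma evals_proj : forall l v, evals (map PR_proj l) v (map (fun i => nth i v 0) l).
Proof. induction l; simpl; constructor; auto. constructor. Qed.

Lemma cmp_ok : forall x L v, length v = L -> eval (cmp L x) v (den v x).
Proof.
  intro x; induction x using ex_ind2; intros L v Hl; simpl.
  - constructor.
  - constructor.
  - eapply ev_comp; [constructor; [apply IHx; auto | constructor] | constructor].
  - apply ev_comp with (ws := map (den v) args).
    + clear IHx. induction H; simpl; constructor; auto.
    + apply IHx. rewrite length_map; auto.
  - econstructor.
    + constructor. apply IHx1; auto.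
      pose proof (evals_proj (seq 0 L) v) as E. subst L. rewrite map_nth_seq in E. exact E.
    + generalize (den v x1). intro m. induction m; simpl.
      * constructor. apply IHx2; auto.
      * econstructor. exact IHm. apply IHx3. simpl; lia.
Qed.

Fixpoint osequence (l : list (option nat)) : option (list nat) :=
  match l with
  | [] => Some []
  | o :: l' => match o, osequence l' with Some w, Some ws => Some (w :: ws) | _, _ => None end
  end.

Fixpoint precb (n : nat) (b : option nat) (s : nat -> nat -> option nat) : option nat :=
  match n with 0 => b | S k => match precb k b s with Some r => s k r | None => None end end.

Fixpoint mres (F : nat -> option nat) (k : nat) : nat :=
  match k with
  | 0 => 0
  | S k' => match mres F k' with
            | 0 => match F k' with None => 1 | Some 0 => S (S k') | Some (S _) => 0 end
            | r => r end
  end.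

Fixpoint evalb (t : nat) (e : PR) (v : list nat) : option nat :=
  match e with
  | PR_zero => Some 0
  | PR_succ => match v with x :: _ => Some (S x) | [] => None end
  | PR_proj i => Some (nth i v 0)
  | PR_comp f gs => match osequence (map (fun g => evalb t g v) gs) with
                    | Some ws => evalb t f ws | None => None end
  | PR_prec f g => match v with [] => None
                   | n :: w => precb n (evalb t f w) (fun k r => evalb t g (k :: r :: w)) end
  | PR_mu f => match mres (fun n => evalb t f (n :: v)) t with S (S n) => Some n | _ => None end
  end.

Lemma mres_spec : forall F k,
  (mres F k = 0 -> forall m, m < k -> exists j, F m = Some (S j)) /\
  (forall n, mres F k = S (S n) -> F n = Some 0 /\ forall m, m < n -> exists j, F m = Some (S j)).
Proof.
  intros F k; induction k as [|k [IH1 IH2]]; simpl.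
  - split; intros; [lia | discriminate].
  - destruct (mres F k) as [|[|r]] eqn:E.
    + destruct (F k) as [[|j]|] eqn:Fk.
      * split; [discriminate|]. intros n Hn; inversion Hn; subst. split; auto.
      * split; [|discriminate]. intros _ m Hm.
        destruct (Nat.eq_dec m k); [subst; eauto|]. apply IH1; auto; lia.
      * split; discriminate.
    + split; discriminate.
    + split; [discriminate|]. auto.
Qed.

Lemma evalb_sound : forall e t v y, evalb t e v = Some y -> eval e v y.
Proof.
  intro e; induction e using PR_ind2; intros t v y Hy; simpl in Hy.
  - inversion Hy; constructor.
  - destruct v; inversion Hy; constructor.
  - inversion Hy; constructor.
  - destruct (osequence (map (fun g => evalb t g v) gs)) as [ws|] eqn:E; [|discriminate].
    econstructor; [|eapply IHe; eauto].
    clear Hy IHe. revert ws E. induction H; intros ws E; simpl in E.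
    + inversion E; constructor.
    + destruct (evalb t x v) eqn:E1; [|discriminate].
      destruct (osequence (map (fun g => evalb t g v) l)) eqn:E2; [|discriminate].
      inversion E; subst. constructor; eauto.
  - destruct v as [|n w]; [discriminate|].
    revert y Hy. induction n; intros y Hy; simpl in Hy.
    + constructor. eauto.
    + destruct (precb n (evalb t e1 w) (fun k r => evalb t e2 (k :: r :: w))) eqn:E; [|discriminate].
      econstructor; eauto.
  - destruct (mres (fun n => evalb t e (n :: v)) t) as [|[|n]] eqn:E; try discriminate.
    inversion Hy; subst.
    destruct (proj2 (mres_spec (fun n => evalb t e (n :: v)) t) y E) as [H1 H2].
    constructor; eauto.
    intros m Hm. destruct (H2 m Hm) as [j Hj]. eauto.
Qed.

Lemma mres_found : forall (F : nat -> option nat) n,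
  F n = Some 0 -> (forall m, m < n -> exists j, F m = Some (S j)) ->
  forall k, (k <= n -> mres F k = 0) /\ (n < k -> mres F k = S (S n)).
Proof.
  intros F n Hn Hm k; induction k as [|k [IH1 IH2]]; simpl.
  - split; auto; lia.
  - split; intros H.
    + rewrite IH1 by lia. destruct (Hm k) as [j Hj]; [lia|]. rewrite Hj; auto.
    + destruct (Nat.eq_dec k n).
      * subst. rewrite IH1 by lia. rewrite Hn. auto.
      * rewrite IH2 by lia. auto.
Qed.

Lemma finite_bound : forall (P : nat -> nat -> Prop) n,
  (forall m, m < n -> exists t0, forall t, t0 <= t -> P m t) ->
  exists T, forall m, m < n -> forall t, T <= t -> P m t.
Proof.
  intros P n; induction n as [|n IH]; intros H.
  - exists 0; intros; lia.
  - destruct IH as [T1 HT1]. { intros m Hm; apply H; lia. }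
    destruct (H n) as [T2 HT2]; [lia|].
    exists (T1 + T2); intros m Hm t Ht.
    destruct (Nat.eq_dec m n); [subst; apply HT2; lia| apply HT1; lia].
Qed.

Fixpoint complete e v y (H : eval e v y) {struct H} :
  exists t0, forall t, t0 <= t -> evalb t e v = Some y
with completes gs v ws (H : evals gs v ws) {struct H} :
  exists t0, forall t, t0 <= t -> osequence (map (fun g => evalb t g v) gs) = Some ws.
Proof.
  - destruct H.
    + exists 0; intros; reflexivity.
    + exists 0; intros; reflexivity.
    + exists 0; intros; reflexivity.
    + destruct (completes _ _ _ H) as [t1 H1].
      destruct (complete _ _ _ H0) as [t2 H2].
      exists (t1 + t2); intros t Ht. simpl. rewrite H1 by lia. apply H2; lia.
    + destruct (complete _ _ _ H) as [t1 H1].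
      exists t1; intros t Ht; simpl. apply H1; auto.
    + destruct (complete _ _ _ H) as [t1 H1].
      destruct (complete _ _ _ H0) as [t2 H2].
      exists (t1 + t2); intros t Ht. simpl.
      specialize (H1 t ltac:(lia)). simpl in H1. rewrite H1. apply H2; lia.
    + destruct (complete _ _ _ H) as [t1 H1].
      assert (HB : forall m, m < n -> exists t0, forall t, t0 <= t ->
                exists j, evalb t f (m :: v) = Some (S j)).
      { intros m Hm. destruct (H0 m Hm) as [j Hj].
        destruct (complete _ _ _ Hj) as [t3 H3]. exists t3; intros t Ht; exists j; auto. }
      destruct (finite_bound _ _ HB) as [T HT].
      exists (S n + t1 + T); intros t Ht. simpl.
      rewrite (proj2 (mres_found (fun m => evalb t f (m :: v)) n (H1 t ltac:(lia))
                 (fun m Hm => HT m Hm t ltac:(lia)) t)) by lia. reflexivity.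
  - destruct H.
    + exists 0; intros; reflexivity.
    + destruct (complete _ _ _ H) as [t1 H1].
      destruct (completes _ _ _ H0) as [t2 H2].
      exists (t1 + t2); intros t Ht. simpl. rewrite H1 by lia. rewrite H2 by lia. reflexivity.
Qed.

Lemma eval_det : forall e v y1 y2, eval e v y1 -> eval e v y2 -> y1 = y2.
Proof.
  intros e v y1 y2 H1 H2.
  destruct (complete _ _ _ H1) as [t1 E1]. destruct (complete _ _ _ H2) as [t2 E2].
  specialize (E1 (t1 + t2) ltac:(lia)). specialize (E2 (t1 + t2) ltac:(lia)).
  rewrite E1 in E2. inversion E2; auto.
Qed.

Definition enc (o : option nat) : nat := match o with Some y => S y | None => 0 end.

Definition IFZ : ex := ERec (EV 0) (EV 1) (EV 4).
Definition ifz (a b c : ex) : ex := ECall IFZ [a; b; c].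
Definition PRED : ex := ERec (EV 0) EZ (EV 0).
Definition predE (a : ex) : ex := ECall PRED [a].

Lemma den_ifz : forall env a b c,
  den env (ifz a b c) = match den env a with 0 => den env b | S _ => den env c end.
Proof. intros. unfold ifz. simpl. destruct (den env a); reflexivity. Qed.

Lemma den_pred : forall env a, den env (predE a) = pred (den env a).
Proof. intros. unfold predE. simpl. destruct (den env a); reflexivity. Qed.

Arguments ifz : simpl never.
Arguments predE : simpl never.
Lemma den_vars : forall pre v,
  map (den (pre ++ v)) (map EV (seq (length pre) (length v))) = v.
Proof. intros. rewrite map_map. simpl. apply map_nth_seq_app. Qed.

Fixpoint allnz (cs : list ex) : ex :=
  match cs with [] => ES EZ | c :: cs' => ifz c EZ (allnz cs') end.

Fixpoint clk (e : PR) (l : nat) : ex :=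
  match e with
  | PR_zero => ES EZ
  | PR_succ => match l with 0 => EZ | _ => ES (ES (EV 1)) end
  | PR_proj i => ES (EV (S i))
  | PR_comp f gs =>
      ifz (allnz (map (fun g => clk g l) gs)) EZ
          (ECall (clk f (length gs)) (EV 0 :: map predE (map (fun g => clk g l) gs)))
  | PR_prec f g =>
      match l with
      | 0 => EZ
      | S l' => ERec (EV 1) (ECall (clk f l') (EV 0 :: map EV (seq 2 l')))
                 (ifz (EV 1) EZ
                    (ECall (clk g (S (S l')))
                       (EV 2 :: EV 0 :: predE (EV 1) :: map EV (seq 4 l'))))
      end
  | PR_mu f =>
      let C := ECall (clk f (S l)) (EV 2 :: EV 0 :: map EV (seq 3 l)) in
      predE (ERec (EV 0) EZ
               (ifz (EV 1) (ifz C (ES EZ) (ifz (predE C) (ES (ES (EV 0))) EZ)) (EV 1)))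
  end.

Lemma allnz_spec : forall gs,
  Forall (fun g => forall l t v, length v = l -> den (t :: v) (clk g l) = enc (evalb t g v)) gs ->
  forall l t v, length v = l ->
  match osequence (map (fun g => evalb t g v) gs) with
  | Some ws => den (t :: v) (allnz (map (fun g => clk g l) gs)) <> 0 /\
               map (fun c => den (t :: v) (predE c)) (map (fun g => clk g l) gs) = ws
  | None => den (t :: v) (allnz (map (fun g => clk g l) gs)) = 0
  end.
Proof.
  intros gs HF l t v Hl. induction HF as [|g gs Hg HF IH]; cbn [map osequence allnz].
  - split; simpl; auto.
  - rewrite den_ifz. rewrite (Hg l t v Hl).
    destruct (evalb t g v) as [w|] eqn:Ew; cbn [enc osequence]; auto.
    destruct (osequence (map (fun g0 => evalb t g0 v) gs)) as [ws|]; auto.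
    destruct IH as [IH1 IH2]. split; auto. cbn [map].
    rewrite den_pred, (Hg l t v Hl), Ew. cbn [enc pred]. f_equal; auto.
Qed.

Lemma osequence_length : forall l ws, osequence l = Some ws -> length ws = length l.
Proof.
  induction l as [|o l IH]; simpl; intros ws H.
  - inversion H; auto.
  - destruct o; [|discriminate]. destruct (osequence l) eqn:E; [|discriminate].
    inversion H; subst; simpl; f_equal; auto.
Qed.

Lemma clk_ok : forall e l t v, length v = l -> den (t :: v) (clk e l) = enc (evalb t e v).
Proof.
  intro e; induction e using PR_ind2; intros l t v Hl.
  - reflexivity.
  - destruct v; simpl in Hl; subst l; reflexivity.
  - reflexivity.
  - simpl clk. rewrite den_ifz. pose proof (allnz_spec gs H l t v Hl) as HA.
    simpl evalb.
    destruct (osequence (map (fun g => evalb t g v) gs)) as [ws|] eqn:E.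
    + destruct HA as [HA1 HA2]. destruct (den (t :: v) (allnz (map (fun g => clk g l) gs))); [congruence|].
      cbn [den].
      assert (E2 : map (den (t :: v)) (EV 0 :: map predE (map (fun g => clk g l) gs)) = t :: ws).
      { cbn [map den nth]. f_equal. rewrite <- HA2. apply map_map. }
      rewrite E2.
      apply IHe. apply osequence_length in E. rewrite E, length_map. auto.
    + rewrite HA. reflexivity.
  - destruct v as [|n w]; simpl in Hl; subst l; [reflexivity|].
    cbn [clk evalb den nth].
    set (env := t :: n :: w).
    assert (HB : den (map (den env) (EV 0 :: map EV (seq 2 (length w)))) (clk e1 (length w)) = enc (evalb t e1 w)).
    { replace (map (den env) (EV 0 :: map EV (seq 2 (length w)))) with (t :: w).
      apply IHe1; auto. cbn [map den nth env]. f_equal. symmetry. apply (den_vars [t; n] w). }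
    rewrite HB. clear HB.
    match goal with |- iterR ?b ?st n = enc (precb n ?B ?S) =>
      assert (HI : forall m, iterR b st m = enc (precb m B S)); [|apply HI] end.
    intro m. induction m as [|m IHm]; cbn [iterR precb]; auto.
    rewrite IHm. rewrite den_ifz. cbn [den nth].
    destruct (precb m (evalb t e1 w) (fun k r => evalb t e2 (k :: r :: w))) as [r|]; cbn [enc]; auto.
    replace (map (den (m :: S r :: env)) (EV 2 :: EV 0 :: predE (EV 1) :: map EV (seq 4 (length w))))
      with (t :: m :: r :: w).
    apply IHe2; simpl; auto.
    cbn [map]. rewrite den_pred. cbn [den nth env]. f_equal. f_equal. f_equal.
    symmetry. apply (den_vars [m; S r; t; n] w).
  - simpl clk. cbn [evalb]. rewrite den_pred. cbn [den nth].
    assert (HM : forall k, iterR 0 (fun k r => den (k :: r :: t :: v)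
        (ifz (EV 1) (ifz (ECall (clk e (S l)) (EV 2 :: EV 0 :: map EV (seq 3 l))) (ES EZ)
           (ifz (predE (ECall (clk e (S l)) (EV 2 :: EV 0 :: map EV (seq 3 l)))) (ES (ES (EV 0))) EZ)) (EV 1))) k
        = mres (fun n => evalb t e (n :: v)) k).
    { intro k; induction k as [|k IHk]; cbn [iterR mres]; auto.
      rewrite IHk. rewrite !den_ifz. rewrite den_pred. cbn [den nth].
      assert (HC : den (map (den (k :: mres (fun n => evalb t e (n :: v)) k :: t :: v))
                (EV 2 :: EV 0 :: map EV (seq 3 l))) (clk e (S l)) = enc (evalb t e (k :: v))).
      { replace (map (den (k :: mres (fun n => evalb t e (n :: v)) k :: t :: v))
                (EV 2 :: EV 0 :: map EV (seq 3 l))) with (t :: k :: v).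
        apply IHe; simpl; auto. cbn [map den nth]. f_equal. f_equal. symmetry. subst l.
        apply (den_vars [k; mres (fun n => evalb t e (n :: v)) k; t] v). }
      rewrite HC. destruct (mres (fun n => evalb t e (n :: v)) k); auto.
      destruct (evalb t e (k :: v)) as [[|j]|]; reflexivity. }
    rewrite HM. destruct (mres (fun n => evalb t e (n :: v)) t) as [|[|n]]; reflexivity.
Qed.

Definition ADD : ex := ERec (EV 0) (EV 1) (ES (EV 1)).
Definition addE a b := ECall ADD [a; b].
Definition MUL : ex := ERec (EV 0) EZ (addE (EV 1) (EV 3)).
Definition mulE a b := ECall MUL [a; b].
Definition SUB : ex := ERec (EV 1) (EV 0) (predE (EV 1)).
Definition subE a b := ECall SUB [a; b].
Definition one : ex := ES EZ.
Definition ODDP : ex := ERec (EV 0) EZ (ifz (EV 1) one EZ).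
Definition oddE a := ECall ODDP [a].
Definition DIV2 : ex := ERec (EV 0) EZ (addE (EV 1) (oddE (EV 0))).
Definition div2E a := ECall DIV2 [a].
Definition ITD : ex := ERec (EV 1) (EV 0) (div2E (EV 1)).
Definition bitE w i := oddE (ECall ITD [w; i]).
Definition bitZ w i := subE one (bitE w i).
Definition TRI : ex := ERec (EV 0) EZ (addE (EV 1) (ES (EV 0))).
Definition pairE a b := addE (ECall TRI [addE a b]) b.
Fixpoint constE (c : nat) : ex := match c with 0 => EZ | S c => ES (constE c) end.
Definition andE := addE.
Definition orE := mulE.
Definition eqE a b := addE (subE a b) (subE b a).

Lemma iterR_eq : forall b st (g : nat -> nat), g 0 = b -> (forall k, st k (g k) = g (S k)) ->
  forall m, iterR b st m = g m.
Proof. intros b st g H0 HS m. induction m; simpl; auto. rewrite IHm. auto. Qed.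

Lemma den_add : forall env a b, den env (addE a b) = den env a + den env b.
Proof. intros. unfold addE, ADD. cbn [den map nth].
  rewrite (iterR_eq _ _ (fun m => m + den env b)); auto. Qed.
Lemma den_mul : forall env a b, den env (mulE a b) = den env a * den env b.
Proof. intros. unfold mulE, MUL. cbn [den map nth].
  rewrite (iterR_eq _ _ (fun m => m * den env b)); auto. intros. rewrite den_add. cbn [den nth]. lia. Qed.
Lemma den_sub : forall env a b, den env (subE a b) = den env a - den env b.
Proof. intros. unfold subE, SUB. cbn [den map nth].
  rewrite (iterR_eq _ _ (fun m => den env a - m)); auto. lia. intros. rewrite den_pred. cbn [den nth]. lia. Qed.
Lemma den_odd : forall env a, den env (oddE a) = Nat.b2n (Nat.odd (den env a)).
Proof. intros. unfold oddE, ODDP. cbn [den map nth].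
  rewrite (iterR_eq _ _ (fun m => Nat.b2n (Nat.odd m))); auto. intros k.
  rewrite den_ifz. cbn [den nth]. rewrite Nat.odd_succ, <- Nat.negb_odd.
  destruct (Nat.odd k); reflexivity. Qed.
Lemma den_div2 : forall env a, den env (div2E a) = Nat.div2 (den env a).
Proof. intros. unfold div2E, DIV2. cbn [den map nth].
  rewrite (iterR_eq _ _ Nat.div2); auto. intros n.
  rewrite den_add, den_odd. cbn [den nth].
  pose proof (Nat.div2_odd n) as H1. pose proof (Nat.div2_odd (S n)) as H2.
  rewrite Nat.odd_succ, <- Nat.negb_odd in H2. destruct (Nat.odd n); simpl in *; lia. Qed.

Lemma testbit_iter : forall i w, Nat.testbit w i = Nat.odd (Nat.iter i Nat.div2 w).
Proof.
  induction i; intros w. simpl. apply Nat.bit0_odd.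
  rewrite <- Nat.testbit_div2, IHi. f_equal. rewrite Nat.iter_succ_r. reflexivity.
Qed.

Lemma den_bit : forall env w i, den env (bitE w i) = Nat.b2n (Nat.testbit (den env w) (den env i)).
Proof. intros. unfold bitE. rewrite den_odd. unfold ITD. cbn [den map nth].
  rewrite testbit_iter. rewrite (iterR_eq _ _ (fun n => Nat.iter n Nat.div2 (den env w))); auto.
  intros. rewrite den_div2. cbn [den nth]. reflexivity. Qed.

Lemma den_bitZ : forall env w i, den env (bitZ w i) = 0 <-> D (den env w) (den env i).
Proof. intros. unfold bitZ, D. rewrite den_sub, den_bit. simpl. destruct (Nat.testbit _ _); simpl; split; auto; intros; try lia; discriminate. Qed.
Lemma den_bitE0 : forall env w i, den env (bitE w i) = 0 <-> ~ D (den env w) (den env i).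
Proof. intros. unfold D. rewrite den_bit. destruct (Nat.testbit _ _); simpl; split; intros; try lia; try congruence. Qed.

Fixpoint tri (s : nat) : nat := match s with 0 => 0 | S s' => tri s' + s end.
Lemma tri_eq : forall s, tri s = s * (s + 1) / 2.
Proof.
  intros s. assert (H : tri s * 2 = s * (s + 1)) by (induction s; simpl; lia).
  rewrite <- H. rewrite Nat.div_mul; lia.
Qed.
Lemma pair_tri : forall x y, pair x y = tri (x + y) + y.
Proof. intros. unfold pair. rewrite tri_eq. reflexivity. Qed.

Lemma den_pair : forall env a b, den env (pairE a b) = pair (den env a) (den env b).
Proof. intros. unfold pairE. rewrite den_add, pair_tri. f_equal. unfold TRI. cbn [den map nth].
  rewrite den_add. rewrite (iterR_eq _ _ tri); auto.
  intros. rewrite den_add. cbn [den nth tri]. lia. Qed.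

Lemma den_const : forall env c, den env (constE c) = c.
Proof. induction c; simpl; auto. Qed.
Lemma den_eq : forall env a b, den env (eqE a b) = 0 <-> den env a = den env b.
Proof. intros. unfold eqE. rewrite den_add, !den_sub. lia. Qed.
Lemma den_and : forall env a b, den env (andE a b) = 0 <-> den env a = 0 /\ den env b = 0.
Proof. intros. unfold andE. rewrite den_add. lia. Qed.
Lemma den_or : forall env a b, den env (orE a b) = 0 <-> den env a = 0 \/ den env b = 0.
Proof. intros. unfold orE. rewrite den_mul. apply Nat.mul_eq_0. Qed.

(* bounded quantifiers; k = length of outer env *)
Definition bexE (k : nat) (n body : ex) : ex :=
  ERec n one (mulE (EV 1) (ECall body (EV 0 :: map EV (seq 2 k)))).
Definition ballE (k : nat) (n body : ex) : ex :=
  ERec n EZ (addE (EV 1) (ECall body (EV 0 :: map EV (seq 2 k)))).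

Lemma den_body : forall v i r body,
  den (map (den (i :: r :: v)) (EV 0 :: map EV (seq 2 (length v)))) body = den (i :: v) body.
Proof. intros. cbn [map den nth]. pose proof (den_vars [i; r] v) as E.
  change ([i; r] ++ v) with (i :: r :: v) in E. change (length [i; r]) with 2 in E. rewrite E. reflexivity. Qed.

Lemma den_bex : forall v n body, den v (bexE (length v) n body) = 0 <->
  exists i, i < den v n /\ den (i :: v) body = 0.
Proof.
  intros. unfold bexE. cbn [den]. generalize (den v n). intro m. induction m; cbn [iterR].
  - split; [discriminate| intros [i [Hi _]]; lia].
  - rewrite den_mul. cbn [den nth]. rewrite den_body. rewrite Nat.mul_eq_0, IHm. split.
    + intros [[i [Hi Hb]]|H]; [exists i; split; auto; lia| exists m; auto].
    + intros [i [Hi Hb]]. destruct (Nat.eq_dec i m); [subst; auto| left; exists i; split; auto; lia].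
Qed.

Lemma den_ball : forall v n body, den v (ballE (length v) n body) = 0 <->
  forall i, i < den v n -> den (i :: v) body = 0.
Proof.
  intros. unfold ballE. cbn [den]. generalize (den v n). intro m. induction m; cbn [iterR].
  - split; auto; intros; lia.
  - rewrite den_add. cbn [den nth]. rewrite den_body.
    match goal with |- context [iterR 0 ?st m] => set (X := iterR 0 st m) in * end.
    split.
    + intros H i Hi. destruct (Nat.eq_dec i m); [subst; lia|]. apply IHm; [lia|lia].
    + intros H. assert (den (m :: v) body = 0) by (apply H; lia).
      assert (X = 0) by (apply IHm; intros; apply H; lia). lia.
Qed.

Lemma D_lt : forall a i, D a i -> i < a.
Proof.
  unfold D; intros a i H. destruct (Nat.eq_dec a 0). subst. rewrite Nat.bits_0 in H. discriminate.
  destruct (Nat.lt_ge_cases i a); auto.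
  rewrite Nat.bits_above_log2 in H. discriminate.
  pose proof (Nat.log2_lt_lin a). lia.
Qed.

Definition SUBS : ex := ballE 2 (EV 0) (orE (bitE (EV 1) (EV 0)) (bitZ (EV 2) (EV 0))).
Definition subsetE a b := ECall SUBS [a; b].
Lemma den_subset : forall env a b, den env (subsetE a b) = 0 <-> subset (D (den env a)) (D (den env b)).
Proof.
  intros. unfold subsetE, SUBS. cbn [den map].
  pose proof (den_ball [den env a; den env b] (EV 0) (orE (bitE (EV 1) (EV 0)) (bitZ (EV 2) (EV 0)))) as H.
  simpl length in H. rewrite H. clear H. cbn [den nth]. split.
  - intros H n Hn. pose proof (D_lt _ _ Hn). specialize (H n H0). rewrite den_or, den_bitE0, den_bitZ in H.
    cbn [den nth] in H. tauto.
  - intros H i Hi. rewrite den_or, den_bitE0, den_bitZ. cbn [den nth].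
    destruct (Nat.testbit (den env a) i) eqn:E. right; apply H; auto. left; unfold D; congruence.
Qed.

Lemma subset_le : forall b a, subset (D a) (D b) -> a <= b.
Proof.
  intro b; induction b as [b IH] using lt_wf_ind; intros a H.
  destruct (Nat.eq_dec a 0); [lia|].
  destruct (Nat.eq_dec b 0).
  { subst. exfalso. specialize (H _ (Nat.bit_log2 a n)). unfold D in H. rewrite Nat.bits_0 in H. discriminate. }
  assert (Hd : Nat.div2 a <= Nat.div2 b).
  { apply IH. pose proof (Nat.div2_odd b). destruct (Nat.odd b); simpl in *; lia.
    intros i Hi. unfold D in *. rewrite Nat.testbit_div2 in *. apply H; auto. }
  pose proof (Nat.div2_odd a). pose proof (Nat.div2_odd b).
  assert (Ho : Nat.odd a = true -> Nat.odd b = true).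
  { intros Ha. rewrite <- Nat.bit0_odd in *. apply H. exact Ha. }
  destruct (Nat.odd a), (Nat.odd b); simpl in *; try lia. 
Qed.

Definition S1 (Y : nat -> Prop) (k : nat) (R : list nat -> Prop) : Prop :=
  exists P : ex, forall v, length v = k ->
    (R v <-> exists s w, den (s :: w :: v) P = 0 /\ subset (D w) Y).

Definition sh (d k : nat) (x : ex) : ex := ECall x (map EV (seq d k)).

Lemma den_sh : forall pre v x, den (pre ++ v) (sh (length pre) (length v) x) = den v x.
Proof. intros. unfold sh. cbn [den]. rewrite den_vars. reflexivity. Qed.
Lemma den_sh2 : forall s w v k x, length v = k -> den (s :: w :: v) (sh 2 k x) = den v x.
Proof. intros. subst. apply (den_sh [s; w] v x). Qed.

Lemma den_bex' : forall k v n body, length v = k -> (den v (bexE k n body) = 0 <->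
  exists i, i < den v n /\ den (i :: v) body = 0).
Proof. intros. subst. apply den_bex. Qed.
Lemma den_ball' : forall k v n body, length v = k -> (den v (ballE k n body) = 0 <->
  forall i, i < den v n -> den (i :: v) body = 0).
Proof. intros. subst. apply den_ball. Qed.

Lemma den_vars' : forall env pre v k d, env = pre ++ v -> length pre = d -> length v = k ->
  map (den env) (map EV (seq d k)) = v.
Proof. intros. subst. apply den_vars. Qed.

Lemma D0 : forall Y, subset (D 0) Y.
Proof. intros Y i H. unfold D in H. rewrite Nat.bits_0 in H. discriminate. Qed.

Lemma subset_lor : forall Y a b, subset (D a) Y -> subset (D b) Y -> subset (D (Nat.lor a b)) Y.
Proof. intros Y a b Ha Hb i H. unfold D in H. rewrite Nat.lor_spec in H.
  apply orb_true_iff in H. destruct H; [apply Ha|apply Hb]; auto. Qed.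
Lemma subset_lor_l : forall a b, subset (D a) (D (Nat.lor a b)).
Proof. intros a b i H. unfold D in *. rewrite Nat.lor_spec, H. auto. Qed.
Lemma subset_lor_r : forall a b, subset (D b) (D (Nat.lor a b)).
Proof. intros a b i H. unfold D in *. rewrite Nat.lor_spec, H. apply orb_true_r. Qed.
Lemma subset_trans : forall (A B C : nat -> Prop), subset A B -> subset B C -> subset A C.
Proof. unfold subset; auto. Qed.

Lemma S1_ext : forall Y k (R R' : list nat -> Prop), (forall v, length v = k -> (R v <-> R' v)) ->
  S1 Y k R -> S1 Y k R'.
Proof. intros Y k R R' H [P HP]. exists P. intros v Hv. rewrite <- H by auto. auto. Qed.

Lemma S1_dec : forall Y k Q, S1 Y k (fun v => den v Q = 0).
Proof.
  intros Y k Q. exists (sh 2 k Q). intros v Hv. split.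
  - intros H. exists 0, 0. rewrite den_sh2 by auto. split; auto. apply D0.
  - intros [s [w [H _]]]. rewrite den_sh2 in H; auto.
Qed.

Lemma S1_mem : forall Y k t, S1 Y k (fun v => Y (den v t)).
Proof.
  intros Y k t. exists (bitZ (EV 1) (sh 2 k t)). intros v Hv. split.
  - intros H. exists 0, (2 ^ den v t). rewrite den_bitZ. cbn [den nth]. rewrite den_sh2 by auto.
    split. apply Nat.pow2_bits_true.
    intros i Hi. unfold D in Hi. rewrite Nat.pow2_bits_eqb in Hi. apply Nat.eqb_eq in Hi. subst; auto.
  - intros [s [w [H1 H2]]]. rewrite den_bitZ in H1. cbn [den nth] in H1. rewrite den_sh2 in H1 by auto.
    apply H2; auto.
Qed.

Lemma S1_or : forall Y k R1 R2, S1 Y k R1 -> S1 Y k R2 -> S1 Y k (fun v => R1 v \/ R2 v).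
Proof.
  intros Y k R1 R2 [P1 H1] [P2 H2]. exists (orE P1 P2). intros v Hv.
  rewrite (H1 v Hv), (H2 v Hv). split.
  - intros [[s [w [A B]]]|[s [w [A B]]]]; exists s, w; rewrite den_or; auto.
  - intros [s [w [A B]]]. rewrite den_or in A. destruct A; [left|right]; exists s, w; auto.
Qed.

Lemma S1_and : forall Y k R1 R2, S1 Y k R1 -> S1 Y k R2 -> S1 Y k (fun v => R1 v /\ R2 v).
Proof.
  intros Y k R1 R2 [P1 H1] [P2 H2].
  set (body := andE (subsetE (EV 1) (EV 5)) (andE (subsetE (EV 0) (EV 5))
        (andE (ECall P1 (EV 3 :: EV 1 :: map EV (seq 6 k))) (ECall P2 (EV 2 :: EV 0 :: map EV (seq 6 k)))))).
  exists (bexE (S (S k)) (ES (EV 0)) (bexE (S (S (S k))) (ES (EV 1))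
           (bexE (S (S (S (S k)))) (ES (EV 3)) (bexE (S (S (S (S (S k))))) (ES (EV 4)) body)))).
  intros v Hv. rewrite (H1 v Hv), (H2 v Hv).
  assert (HB : forall s w s1 s2 w1 w2, den (w2 :: w1 :: s2 :: s1 :: s :: w :: v) body = 0 <->
     subset (D w1) (D w) /\ subset (D w2) (D w) /\ den (s1 :: w1 :: v) P1 = 0 /\ den (s2 :: w2 :: v) P2 = 0).
  { intros. unfold body. rewrite !den_and, !den_subset. cbn [den nth map].
    rewrite (den_vars' _ [w2; w1; s2; s1; s; w] v k 6) by (simpl; auto). tauto. }
  split.
  - intros [[s1 [w1 [A1 B1]]] [s2 [w2 [A2 B2]]]].
    exists (s1 + s2), (Nat.lor w1 w2). split; [|apply subset_lor; auto].
    rewrite den_bex' by (simpl; lia). exists s1. split; [cbn [den nth]; lia|].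
    rewrite den_bex' by (simpl; lia). exists s2. split; [cbn [den nth]; lia|].
    rewrite den_bex' by (simpl; lia). exists w1. split.
    { cbn [den nth]. pose proof (subset_le _ _ (subset_lor_l w1 w2)). lia. }
    rewrite den_bex' by (simpl; lia). exists w2. split.
    { cbn [den nth]. pose proof (subset_le _ _ (subset_lor_r w1 w2)). lia. }
    apply HB. split; [apply subset_lor_l|]. split; [apply subset_lor_r|]. auto.
  - intros [s [w [A B]]].
    rewrite den_bex' in A by (simpl; lia). destruct A as [s1 [_ A]].
    rewrite den_bex' in A by (simpl; lia). destruct A as [s2 [_ A]].
    rewrite den_bex' in A by (simpl; lia). destruct A as [w1 [_ A]].
    rewrite den_bex' in A by (simpl; lia). destruct A as [w2 [_ A]].
    apply HB in A. destruct A as [C1 [C2 [C3 C4]]].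
    split; [exists s1, w1|exists s2, w2]; split; auto; eapply subset_trans; eauto.
Qed.

Lemma S1_ex : forall Y k R, S1 Y (S k) R -> S1 Y k (fun v => exists x, R (x :: v)).
Proof.
  intros Y k R [P H].
  exists (bexE (S (S k)) (ES (EV 0)) (bexE (S (S (S k))) (ES (EV 1))
            (ECall P (EV 1 :: EV 3 :: EV 0 :: map EV (seq 4 k))))).
  intros v Hv.
  assert (HB : forall x s' s w, den (x :: s' :: s :: w :: v) (ECall P (EV 1 :: EV 3 :: EV 0 :: map EV (seq 4 k)))
     = den (s' :: w :: x :: v) P).
  { intros. cbn [den map nth]. rewrite (den_vars' _ [x; s'; s; w] v k 4) by (simpl; auto). reflexivity. }
  split.
  - intros [x Hx]. apply H in Hx; [|simpl; lia]. destruct Hx as [s' [w [A B]]].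
    exists (s' + x), w. split; auto.
    rewrite den_bex' by (simpl; lia). exists s'. split; [cbn [den nth]; lia|].
    rewrite den_bex' by (simpl; lia). exists x. split; [cbn [den nth]; lia|].
    rewrite HB. auto.
  - intros [s [w [A B]]].
    rewrite den_bex' in A by (simpl; lia). destruct A as [s' [_ A]].
    rewrite den_bex' in A by (simpl; lia). destruct A as [x [_ A]].
    rewrite HB in A. exists x. apply H; [simpl; lia|]. exists s', w; auto.
Qed.

Lemma choice_bound : forall Y n (Q : nat -> nat -> nat -> Prop),
  (forall i, i < n -> exists s w, Q i s w /\ subset (D w) Y) ->
  exists S W, subset (D W) Y /\
    forall i, i < n -> exists s w, s <= S /\ subset (D w) (D W) /\ Q i s w.
Proof.
  intros Y n Q; induction n as [|n IH]; intros H.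
  - exists 0, 0. split; [apply D0| intros; lia].
  - destruct IH as [S0 [W0 [HW0 HQ]]]. { intros; apply H; lia. }
    destruct (H n) as [s [w [Hq Hw]]]; [lia|].
    exists (S0 + s), (Nat.lor W0 w). split; [apply subset_lor; auto|].
    intros i Hi. destruct (Nat.eq_dec i n).
    + subst. exists s, w. split; [lia|]. split; auto. apply subset_lor_r.
    + destruct (HQ i ltac:(lia)) as [s' [w' [A [B C]]]]. exists s', w'. split; [lia|].
      split; auto. eapply subset_trans; [exact B| apply subset_lor_l].
Qed.

Lemma S1_ball : forall Y k R t, S1 Y (S k) R ->
  S1 Y k (fun v => forall i, i < den v t -> R (i :: v)).
Proof.
  intros Y k R t [P H].
  set (body := andE (subsetE (EV 0) (EV 4)) (ECall P (EV 1 :: EV 0 :: EV 2 :: map EV (seq 5 k)))).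
  exists (ballE (S (S k)) (sh 2 k t) (bexE (S (S (S k))) (ES (EV 1))
            (bexE (S (S (S (S k)))) (ES (EV 3)) body))).
  intros v Hv.
  assert (HB : forall w' s' i s w, den (w' :: s' :: i :: s :: w :: v) body = 0 <->
      subset (D w') (D w) /\ den (s' :: w' :: i :: v) P = 0).
  { intros. unfold body. rewrite den_and, den_subset. cbn [den nth map].
    rewrite (den_vars' _ [w'; s'; i; s; w] v k 5) by (simpl; auto). tauto. }
  split.
  - intros HR.
    destruct (choice_bound Y (den v t) (fun i s w => den (s :: w :: i :: v) P = 0)) as [S0 [W0 [HW HQ]]].
    { intros i Hi. apply H; [simpl; lia|]. auto. }
    exists S0, W0. split; auto.
    rewrite den_ball' by (simpl; lia). rewrite den_sh2 by auto. intros i Hi.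
    destruct (HQ i Hi) as [s' [w' [A [B C]]]].
    rewrite den_bex' by (simpl; lia). exists s'. split; [cbn [den nth]; lia|].
    rewrite den_bex' by (simpl; lia). exists w'. split.
    { cbn [den nth]. pose proof (subset_le _ _ B). lia. }
    apply HB. auto.
  - intros [s [w [A B]]] i Hi.
    rewrite den_ball' in A by (simpl; lia). rewrite den_sh2 in A by auto.
    specialize (A i Hi).
    rewrite den_bex' in A by (simpl; lia). destruct A as [s' [_ A]].
    rewrite den_bex' in A by (simpl; lia). destruct A as [w' [_ A]].
    apply HB in A. destruct A as [A1 A2].
    apply H; [simpl; lia|]. exists s', w'. split; auto. eapply subset_trans; eauto.
Qed.

Lemma S1_subst : forall Y m k R ts, S1 Y m R -> length ts = m ->
  S1 Y k (fun v => R (map (den v) ts)).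
Proof.
  intros Y m k R ts [P H] Hts. exists (ECall P (EV 0 :: EV 1 :: map (sh 2 k) ts)).
  intros v Hv.
  assert (HB : forall s w, den (s :: w :: v) (ECall P (EV 0 :: EV 1 :: map (sh 2 k) ts))
        = den (s :: w :: map (den v) ts) P).
  { intros. cbn [den map nth]. rewrite map_map. f_equal. f_equal. f_equal.
    apply map_ext. intros. apply den_sh2; auto. }
  rewrite H by (rewrite length_map; auto). split.
  - intros [s [w [A B]]]. exists s, w. rewrite HB. auto.
  - intros [s [w [A B]]]. exists s, w. rewrite HB in A. auto.
Qed.

Lemma S1_ce : forall Y e l, S1 Y l (fun v => exists y, eval e v y).
Proof.
  intros Y e l. exists (ifz (ECall (clk e l) (EV 0 :: map EV (seq 2 l))) one EZ).
  intros v Hv.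
  assert (HB : forall s w, den (s :: w :: v) (ECall (clk e l) (EV 0 :: map EV (seq 2 l))) = enc (evalb s e v)).
  { intros. cbn [den map nth]. rewrite (den_vars' _ [s; w] v l 2) by (simpl; auto). apply clk_ok; auto. }
  split.
  - intros [y Hy]. destruct (complete _ _ _ Hy) as [t Ht]. exists t, 0.
    split; [|apply D0]. rewrite den_ifz, HB, Ht by lia. reflexivity.
  - intros [s [w [A _]]]. rewrite den_ifz, HB in A.
    destruct (evalb s e v) eqn:E; [|discriminate]. exists n. eapply evalb_sound; eauto.
Qed.

Lemma exists_least : forall (P : nat -> Prop), (forall n, P n \/ ~ P n) ->
  forall n, P n -> exists n, P n /\ forall m, m < n -> ~ P m.
Proof.
  intros P dec n. induction n as [n IH] using lt_wf_ind. intros Hn.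
  assert (H : (exists m, m < n /\ P m) \/ ~ (exists m, m < n /\ P m)).
  { clear IH Hn. induction n. right; intros [m [Hm _]]; lia.
    destruct IHn as [[m [Hm1 Hm2]]|Hno]. left; exists m; split; auto; lia.
    destruct (dec n). left; exists n; auto. right; intros [m [Hm1 Hm2]].
    destruct (Nat.eq_dec m n); subst; auto. apply Hno; exists m; split; auto; lia. }
  destruct H as [[m [Hm1 Hm2]]|Hno]. apply (IH m); auto.
  exists n; split; auto. intros m Hm Pm. apply Hno; eauto.
Qed.

Lemma mu_ok : forall Q v, (exists y, eval (PR_mu (cmp (S (length v)) Q)) v y) <->
  exists s, den (s :: v) Q = 0.
Proof.
  intros Q v. split.
  - intros [y Hy]. inversion Hy; subst. exists y.
    eapply eval_det; [apply cmp_ok; reflexivity| eauto].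
  - intros [s Hs]. destruct (exists_least (fun s => den (s :: v) Q = 0)) with s as [n [Hn Hmin]]; auto.
    { intros; lia. }
    exists n. constructor.
    + rewrite <- Hn. apply cmp_ok; reflexivity.
    + intros m Hm. specialize (Hmin m Hm). destruct (den (m :: v) Q) as [|j] eqn:E; [lia|].
      exists j. rewrite <- E. apply cmp_ok; reflexivity.
Qed.

Lemma S1_enum : forall Y R, S1 Y 1 R -> enum_le (fun x => R [x]) Y.
Proof.
  intros Y R [P H].
  exists (fun x u => exists s, den [s; u; x] P = 0). split.
  - exists (PR_mu (cmp 3 (ECall P [EV 0; EV 2; EV 1]))). intros x u.
    rewrite (mu_ok (ECall P [EV 0; EV 2; EV 1]) [x; u]). reflexivity.
  - intros x. rewrite (H [x]) by reflexivity. split.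
    + intros [s [w [A B]]]. exists w. split; eauto.
    + intros [u [[s A] B]]. exists s, u. auto.
Qed.

Lemma D_empty : forall w, subset (D w) (fun _ => False) -> w = 0.
Proof.
  intros w H. destruct (Nat.eq_dec w 0); auto. exfalso. apply (H (Nat.log2 w)). apply Nat.bit_log2; auto.
Qed.

Lemma S1_cet : forall R, S1 (fun _ => False) 1 R -> ce (fun x => R [x]).
Proof.
  intros R [P H]. exists (PR_mu (cmp 2 (ECall P [EV 0; EZ; EV 1]))). intros x.
  rewrite (mu_ok (ECall P [EV 0; EZ; EV 1]) [x]). rewrite (H [x]) by reflexivity. split.
  - intros [s [w [A B]]]. apply D_empty in B. subst. exists s. exact A.
  - intros [s A]. exists s, 0. split; [exact A| apply D0].
Qed.

Lemma tri_mono : forall s s', s <= s' -> tri s <= tri s'.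
Proof. intros s s' H. induction H; simpl; lia. Qed.

Lemma pair_inj : forall a b c d, pair a b = pair c d -> a = c /\ b = d.
Proof.
  intros a b c d H. rewrite !pair_tri in H.
  assert (a + b = c + d).
  { destruct (lt_eq_lt_dec (a + b) (c + d)) as [[Hl|He]|Hl]; auto; exfalso.
    - pose proof (tri_mono (S (a + b)) (c + d) Hl). simpl in H0. lia.
    - pose proof (tri_mono (S (c + d)) (a + b) Hl). simpl in H0. lia. }
  rewrite H0 in H. lia.
Qed.

Lemma tri_ge : forall s, s <= tri s.
Proof. induction s; simpl; lia. Qed.
Lemma pair_ge_l : forall a b, a <= pair a b.
Proof. intros. rewrite pair_tri. pose proof (tri_ge (a + b)). lia. Qed.
Lemma pair_ge_r : forall a b, b <= pair a b.
Proof. intros. rewrite pair_tri. lia. Qed.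

Definition POW2 : ex := ERec (EV 0) one (addE (EV 1) (EV 1)).
Definition powE a := ECall POW2 [a].
Lemma den_pow : forall env a, den env (powE a) = 2 ^ den env a.
Proof. intros. unfold powE, POW2. cbn [den map nth].
  rewrite (iterR_eq _ _ (fun m => 2 ^ m)); auto. intros. rewrite den_add. cbn [den nth].
  rewrite Nat.pow_succ_r'. lia. Qed.

Lemma D_pow : forall n i, D (2 ^ n) i <-> i = n.
Proof. intros. unfold D. rewrite Nat.pow2_bits_eqb. rewrite Nat.eqb_eq. split; auto. Qed.

Definition SF (Y : nat -> Prop) (k : nat) (F : list nat -> nat -> Prop) : Prop :=
  S1 Y (S k) (fun v => F (tl v) (hd 0 v)).

Lemma subset_D_iff : forall u (G : nat -> Prop),
  subset (D u) G <-> forall i, i < u -> ~ D u i \/ G i.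
Proof.
  intros u G. split.
  - intros H i Hi. unfold D. destruct (Nat.testbit u i) eqn:E. right; apply H; auto. left; congruence.
  - intros H i Hi. destruct (H i (D_lt _ _ Hi)); tauto.
Qed.

Lemma SF_gapp : forall Y k F G, SF Y k F -> SF Y k G -> SF Y k (fun p => gapp (F p) (G p)).
Proof.
  intros Y k F G HF HG. unfold SF in *.
  assert (H1 : S1 Y (S (S k)) (fun v => F (tl (tl v)) (pair (nth 1 v 0) (nth 0 v 0)))).
  { eapply S1_ext; [|apply (S1_subst Y (S k) (S (S k)) _ (pairE (EV 1) (EV 0) :: map EV (seq 2 k)) HF)].
    - intros v Hv. destruct v as [|u [|n p]]; simpl in Hv; try lia.
      cbn [map hd tl]. rewrite den_pair. cbn [den nth].
      rewrite (den_vars' _ [u; n] p k 2) by (simpl; auto; lia). tauto.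
    - simpl. rewrite length_map, length_seq. auto. }
  assert (H2 : S1 Y (S (S (S k))) (fun v => ~ D (nth 1 v 0) (nth 0 v 0) \/ G (tl (tl (tl v))) (nth 0 v 0))).
  { apply S1_or.
    - eapply S1_ext; [|apply (S1_dec Y _ (bitE (EV 1) (EV 0)))].
      intros v Hv. rewrite den_bitE0. cbn [den]. tauto.
    - eapply S1_ext; [|apply (S1_subst Y (S k) (S (S (S k))) _ (EV 0 :: map EV (seq 3 k)) HG)].
      + intros v Hv. destruct v as [|i [|u [|n p]]]; simpl in Hv; try lia.
        cbn [map hd tl den nth]. rewrite (den_vars' _ [i; u; n] p k 3) by (simpl; auto; lia). tauto.
      + simpl. rewrite length_map, length_seq. auto. }
  pose proof (S1_ball Y (S (S k)) _ (EV 0) H2) as H3.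
  pose proof (S1_and Y _ _ _ H1 H3) as H4.
  pose proof (S1_ex Y _ _ H4) as H5.
  eapply S1_ext; [|exact H5].
  intros v Hv. destruct v as [|n p]; simpl in Hv; try lia. simpl.
  unfold gapp. split.
  - intros [u [A B]]. exists u. split; auto. apply subset_D_iff. exact B.
  - intros [u [A B]]. exists u. split; auto. intros i Hi. rewrite subset_D_iff in B. apply B; auto.
Qed.

Lemma SF_const : forall Y k A, S1 Y 1 (fun v => A (hd 0 v)) -> SF Y k (fun _ => A).
Proof.
  intros Y k A H. unfold SF.
  eapply S1_ext; [|apply (S1_subst Y 1 (S k) _ [EV 0] H); reflexivity].
  intros v Hv. destruct v; simpl in *; try lia. tauto.
Qed.

Lemma L_inG : forall Y A, inG Y A -> S1 Y 1 (fun v => A (hd 0 v)).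
Proof.
  intros Y A H. induction H.
  - eapply S1_ext; [|apply (S1_mem Y 1 (EV 0))]. intros v Hv. destruct v as [|x [|]]; simpl in *; try lia.
    rewrite H. tauto.
  - destruct H as [e He]. eapply S1_ext; [|apply (S1_ce Y e 1)].
    intros v Hv. destruct v as [|x [|]]; simpl in *; try lia. rewrite He. tauto.
  - pose proof (SF_gapp Y 0 (fun _ => B) (fun _ => C) (SF_const Y 0 B IHinG1) (SF_const Y 0 C IHinG2)) as HA.
    unfold SF in HA. eapply S1_ext; [|exact HA]. intros v Hv. simpl. rewrite H1. tauto.
Qed.

Lemma ce_empty : ce (fun _ => False).
Proof.
  apply (S1_cet (fun _ => False)).
  eapply S1_ext; [|apply (S1_dec _ 1 (ES EZ))]. intros v _. simpl. split; [discriminate|tauto].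
Qed.

Lemma ce_full : ce (fun _ => True).
Proof.
  apply (S1_cet (fun _ => True)).
  eapply S1_ext; [|apply (S1_dec _ 1 EZ)]. intros v _. simpl. tauto.
Qed.

Lemma X_in_GY : forall X Y, enum_le X Y -> forall A, (forall n, A n <-> X n) -> inG Y A.
Proof.
  intros X Y [R [[e He] HR]] A HA.
  set (Phi := fun z => exists x u, z = pair x u /\ R x u).
  assert (HPhi : ce Phi).
  { apply (S1_cet (fun v => Phi (hd 0 v))).
    assert (H1 : S1 (fun _ => False) 3 (fun v => nth 2 v 0 = pair (nth 1 v 0) (nth 0 v 0) /\ R (nth 1 v 0) (nth 0 v 0))).
    { apply S1_and.
      - eapply S1_ext; [|apply (S1_dec _ 3 (eqE (EV 2) (pairE (EV 1) (EV 0))))].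
        intros v _. rewrite den_eq, den_pair. cbn [den]. tauto.
      - eapply S1_ext; [|apply (S1_subst _ 2 3 _ [EV 1; EV 0] (S1_ce _ e 2)); reflexivity].
        intros v _. cbn [map den]. rewrite He. tauto. }
    pose proof (S1_ex _ _ _ (S1_ex _ _ _ H1)) as H2.
    eapply S1_ext; [|exact H2]. intros v Hv. destruct v as [|z [|]]; simpl in Hv; try lia.
    simpl. unfold Phi. reflexivity. }
  apply (G_app Y A Phi Y (G_ce Y Phi HPhi) (G_base Y Y (fun n => iff_refl _))).
  intros n. rewrite HA, HR. unfold gapp, Phi. split.
  - intros [u [A1 A2]]. exists u. split; auto. exists n, u; auto.
  - intros [u [[x [u' [A1 A2]]] A3]]. apply pair_inj in A1. destruct A1; subst. exists u'; auto.
Qed.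

Lemma inG_mono : forall X Y, enum_le X Y -> forall A, inG X A -> inG Y A.
Proof.
  intros X Y H A HA. induction HA.
  - eapply X_in_GY; eauto.
  - apply G_ce; auto.
  - eapply G_app; [exact IHHA1 | exact IHHA2 | assumption].
Qed.

Lemma easy_dir : forall X Y, enum_le X Y ->
  exists f, embedding X Y f /\ ~ order_reversing X f.
Proof.
  intros X Y H. exists (fun A => A). split.
  - split; [|split].
    + apply inG_mono; auto.
    + auto.
    + reflexivity.
  - intros Hor.
    specialize (Hor (fun _ => False) (fun _ => True) (G_ce X _ ce_empty) (G_ce X _ ce_full)
                  (fun n h => match h with end) 0 I). exact Hor.
Qed.

Lemma set_ext : forall (P Q : nat -> Prop), (forall x, P x <-> Q x) -> P = Q.
Proof. intros. apply functional_extensionality. intros. apply propositional_extensionality. auto. Qed.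

Fixpoint itY (fZ fS : nat -> Prop) (n : nat) : nat -> Prop :=
  match n with 0 => fZ | S n' => gapp fS (itY fZ fS n') end.

Definition Closed (fZ fS : nat -> Prop) (w : nat) : Prop :=
  forall j, j < w -> forall m, m < w -> D w (pair j m) ->
    (j = 0 /\ fZ m) \/
    (j <> 0 /\ exists u, fS (pair m u) /\ forall i, i < u -> ~ D u i \/ D w (pair (pred j) i)).

Lemma D_pair_lt : forall w j m, D w (pair j m) -> j < w /\ m < w.
Proof. intros. apply D_lt in H. pose proof (pair_ge_l j m). pose proof (pair_ge_r j m). lia. Qed.

Lemma closed_sound : forall fZ fS w, Closed fZ fS w ->
  forall n m, D w (pair n m) -> itY fZ fS n m.
Proof.
  intros fZ fS w Hc n. induction n as [|n IH]; intros m Hd; destruct (D_pair_lt _ _ _ Hd) as [H1 H2];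
    destruct (Hc _ H1 _ H2 Hd) as [[A1 A2]|[A1 [u [A2 A3]]]]; try lia; simpl; auto.
  exists u. split; auto. apply subset_D_iff. intros i Hi. destruct (A3 i Hi); auto.
Qed.

Lemma D_lor : forall a b i, D (Nat.lor a b) i <-> D a i \/ D b i.
Proof. intros. unfold D. rewrite Nat.lor_spec. apply orb_true_iff. Qed.

Lemma closed_lor : forall fZ fS w1 w2, Closed fZ fS w1 -> Closed fZ fS w2 -> Closed fZ fS (Nat.lor w1 w2).
Proof.
  intros fZ fS w1 w2 H1 H2 j Hj m Hm Hd. apply D_lor in Hd.
  destruct Hd as [Hd|Hd]; destruct (D_pair_lt _ _ _ Hd) as [B1 B2].
  - destruct (H1 _ B1 _ B2 Hd) as [C|[C1 [u [C2 C3]]]]; [left; auto|right; split; auto; exists u; split; auto].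
    intros i Hi. destruct (C3 i Hi); auto. right. apply D_lor; auto.
  - destruct (H2 _ B1 _ B2 Hd) as [C|[C1 [u [C2 C3]]]]; [left; auto|right; split; auto; exists u; split; auto].
    intros i Hi. destruct (C3 i Hi); auto. right. apply D_lor; auto.
Qed.

Lemma closed_0 : forall fZ fS, Closed fZ fS 0.
Proof. intros fZ fS j Hj. lia. Qed.

Lemma closed_choice : forall fZ fS n u,
  (forall i, i < u -> D u i -> exists w, Closed fZ fS w /\ D w (pair n i)) ->
  exists W, Closed fZ fS W /\ forall i, i < u -> D u i -> D W (pair n i).
Proof.
  intros fZ fS n u H. assert (forall b, b <= u -> exists W, Closed fZ fS W /\ forall i, i < b -> D u i -> D W (pair n i)).
  { intro b; induction b as [|b IH]; intros Hb.
    - exists 0. split; [apply closed_0| intros; lia].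
    - destruct (IH ltac:(lia)) as [W [HW1 HW2]].
      unfold D at 1. destruct (Nat.testbit u b) eqn:E.
      + destruct (H b ltac:(lia) E) as [w [Hw1 Hw2]]. exists (Nat.lor W w). split; [apply closed_lor; auto|].
        intros i Hi Hu. apply D_lor. destruct (Nat.eq_dec i b); [subst; auto| left; apply HW2; auto; lia].
      + exists W. split; auto. intros i Hi Hu. destruct (Nat.eq_dec i b); [subst; unfold D in Hu; congruence|].
        apply HW2; auto; lia. }
  apply (H0 u). lia.
Qed.

Lemma closed_complete : forall fZ fS n m, itY fZ fS n m -> exists w, Closed fZ fS w /\ D w (pair n m).
Proof.
  intros fZ fS n. induction n as [|n IH]; intros m Hm; simpl in Hm.
  - exists (2 ^ pair 0 m). split; [|apply D_pow; auto].
    intros j Hj m' Hm' Hd. apply D_pow in Hd. apply pair_inj in Hd. destruct Hd; subst. left; auto.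
  - destruct Hm as [u [Hu1 Hu2]].
    destruct (closed_choice fZ fS n u) as [W [HW1 HW2]].
    { intros i Hi Hd. apply IH. apply Hu2. auto. }
    exists (Nat.lor W (2 ^ pair (S n) m)). split; [|apply D_lor; right; apply D_pow; auto].
    intros j Hj m' Hm' Hd. apply D_lor in Hd. destruct Hd as [Hd|Hd].
    + destruct (D_pair_lt _ _ _ Hd) as [B1 B2].
      destruct (HW1 _ B1 _ B2 Hd) as [C|[C1 [u' [C2 C3]]]]; [left; auto|right; split; auto; exists u'; split; auto].
      intros i Hi. destruct (C3 i Hi); auto. right. apply D_lor; auto.
    + apply D_pow in Hd. apply pair_inj in Hd. destruct Hd; subst. right. split; [lia|].
      exists u. split; auto. intros i Hi. unfold D. destruct (Nat.testbit u i) eqn:E; [right|left; congruence].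
      apply D_lor. left. simpl. apply HW2; auto.
Qed.

Lemma itY_S1 : forall Y fZ fS, S1 Y 1 (fun v => fZ (hd 0 v)) -> S1 Y 1 (fun v => fS (hd 0 v)) ->
  SF Y 1 (fun p => itY fZ fS (hd 0 p)).
Proof.
  intros Y fZ fS HZ HS.
  assert (R5 : S1 Y 5 (fun v => ~ D (nth 1 v 0) (nth 0 v 0) \/ D (nth 4 v 0) (pair (pred (nth 3 v 0)) (nth 0 v 0)))).
  { apply S1_or.
    - eapply S1_ext; [|apply (S1_dec Y 5 (bitE (EV 1) (EV 0)))]. intros v _. rewrite den_bitE0. reflexivity.
    - eapply S1_ext; [|apply (S1_dec Y 5 (bitZ (EV 4) (pairE (predE (EV 3)) (EV 0))))]. intros v _.
      rewrite den_bitZ, den_pair, den_pred. reflexivity. }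
  assert (R4 : S1 Y 4 (fun v => fS (pair (nth 1 v 0) (nth 0 v 0)) /\
       forall i, i < nth 0 v 0 -> ~ D (nth 0 v 0) i \/ D (nth 3 v 0) (pair (pred (nth 2 v 0)) i))).
  { apply S1_and.
    - eapply S1_ext; [|apply (S1_subst Y 1 4 _ [pairE (EV 1) (EV 0)] HS); reflexivity].
      intros v _. cbn [map hd]. rewrite den_pair. reflexivity.
    - eapply S1_ext; [|apply (S1_ball Y 4 _ (EV 0) R5)]. intros v _. reflexivity. }
  assert (R3 : S1 Y 3 (fun v => ~ D (nth 2 v 0) (pair (nth 1 v 0) (nth 0 v 0)) \/
       ((nth 1 v 0 = 0 /\ fZ (nth 0 v 0)) \/
        (nth 1 v 0 <> 0 /\ exists u, fS (pair (nth 0 v 0) u) /\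
            forall i, i < u -> ~ D u i \/ D (nth 2 v 0) (pair (pred (nth 1 v 0)) i))))).
  { apply S1_or; [|apply S1_or; apply S1_and].
    - eapply S1_ext; [|apply (S1_dec Y 3 (bitE (EV 2) (pairE (EV 1) (EV 0))))]. intros v _.
      rewrite den_bitE0, den_pair. reflexivity.
    - eapply S1_ext; [|apply (S1_dec Y 3 (EV 1))]. reflexivity.
    - eapply S1_ext; [|apply (S1_subst Y 1 3 _ [EV 0] HZ); reflexivity]. reflexivity.
    - eapply S1_ext; [|apply (S1_dec Y 3 (ifz (EV 1) one EZ))]. intros v _. cbv beta. rewrite den_ifz.
      cbn [den]. destruct (nth 1 v 0); simpl; split; intros; try lia; congruence.
    - eapply S1_ext; [|apply (S1_ex Y 3 _ R4)]. reflexivity. }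
  assert (R1 : S1 Y 1 (fun v => Closed fZ fS (hd 0 v))).
  { pose proof (S1_ball Y 2 _ (EV 1) R3) as R2.
    pose proof (S1_ball Y 1 _ (EV 0) R2) as R1.
    eapply S1_ext; [|exact R1]. intros v Hv. destruct v as [|w [|]]; simpl in Hv; try lia.
    unfold Closed. simpl. split.
    - intros H j Hj m Hm Hd. destruct (H j Hj m Hm) as [C|C]; [contradiction|exact C].
    - intros H j Hj m Hm. unfold D at 1. destruct (Nat.testbit w (pair j m)) eqn:E.
      + right. apply H; auto.
      + left. unfold D. congruence. }
  assert (RI : S1 Y 3 (fun v => Closed fZ fS (nth 0 v 0) /\ D (nth 0 v 0) (pair (nth 2 v 0) (nth 1 v 0)))).
  { apply S1_and.
    - eapply S1_ext; [|apply (S1_subst Y 1 3 _ [EV 0] R1); reflexivity]. reflexivity.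
    - eapply S1_ext; [|apply (S1_dec Y 3 (bitZ (EV 0) (pairE (EV 2) (EV 1))))]. intros v _.
      rewrite den_bitZ, den_pair. reflexivity. }
  pose proof (S1_ex Y 2 _ RI) as HE. unfold SF.
  eapply S1_ext; [|exact HE]. intros v Hv. destruct v as [|m [|n [|]]]; simpl in Hv; try lia.
  simpl. split.
  - intros [w [A1 A2]]. eapply closed_sound; eauto.
  - intros H. apply closed_complete. auto.
Qed.

Definition Zs : nat -> Prop := fun m => m = 0.
Definition Scs : nat -> Prop := fun z => exists m, z = pair (S m) (2 ^ m).
Definition Vs : nat -> Prop := fun z => exists i n,
  z = pair (pair (pair (pair i 0) (2 ^ i)) 0) (2 ^ n) \/
  z = pair (pair (pair (pair i (2 ^ i)) 0) (2 ^ n)) (2 ^ n).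

Lemma ce_Zs : ce Zs.
Proof.
  apply (S1_cet (fun v => Zs (hd 0 v))).
  eapply S1_ext; [|apply (S1_dec _ 1 (EV 0))]. intros v Hv. destruct v as [|x [|]]; simpl in *; try lia.
  unfold Zs. reflexivity.
Qed.

Lemma ce_Scs : ce Scs.
Proof.
  apply (S1_cet (fun v => Scs (hd 0 v))).
  assert (H : S1 (fun _ => False) 2 (fun v => nth 1 v 0 = pair (S (nth 0 v 0)) (2 ^ nth 0 v 0))).
  { eapply S1_ext; [|apply (S1_dec _ 2 (eqE (EV 1) (pairE (ES (EV 0)) (powE (EV 0)))))].
    intros v _. cbv beta. rewrite den_eq, den_pair, den_pow. reflexivity. }
  eapply S1_ext; [|apply (S1_ex _ _ _ H)]. intros v Hv. destruct v as [|x [|]]; simpl in *; try lia.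
  unfold Scs. reflexivity.
Qed.

Lemma ce_Vs : ce Vs.
Proof.
  apply (S1_cet (fun v => Vs (hd 0 v))).
  assert (H : S1 (fun _ => False) 3 (fun v =>
     nth 2 v 0 = pair (pair (pair (pair (nth 1 v 0) 0) (2 ^ nth 1 v 0)) 0) (2 ^ nth 0 v 0) \/
     nth 2 v 0 = pair (pair (pair (pair (nth 1 v 0) (2 ^ nth 1 v 0)) 0) (2 ^ nth 0 v 0)) (2 ^ nth 0 v 0))).
  { apply S1_or.
    - eapply S1_ext; [|apply (S1_dec _ 3 (eqE (EV 2) (pairE (pairE (pairE (pairE (EV 1) EZ) (powE (EV 1))) EZ) (powE (EV 0)))))].
      intros v _. cbv beta. rewrite den_eq, !den_pair, !den_pow. reflexivity.
    - eapply S1_ext; [|apply (S1_dec _ 3 (eqE (EV 2) (pairE (pairE (pairE (pairE (EV 1) (powE (EV 1))) EZ) (powE (EV 0))) (powE (EV 0)))))].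
      intros v _. cbv beta. rewrite den_eq, !den_pair, !den_pow. reflexivity. }
  eapply S1_ext; [|apply (S1_ex _ _ _ (S1_ex _ _ _ H))]. intros v Hv. destruct v as [|x [|]]; simpl in *; try lia.
  unfold Vs. reflexivity.
Qed.

Fixpoint it (n : nat) : nat -> Prop :=
  match n with 0 => Zs | S n' => gapp Scs (it n') end.

Lemma it_eq : forall n m, it n m <-> m = n.
Proof.
  induction n as [|n IH]; intros m; simpl.
  - unfold Zs. reflexivity.
  - unfold gapp, Scs. split.
    + intros [u [[m' Hm'] Hs]]. apply pair_inj in Hm'. destruct Hm'; subst.
      assert (it n m') by (apply Hs; apply D_pow; auto). apply IH in H. subst. auto.
    + intros ->. exists (2 ^ n). split; [exists n; auto|]. intros i Hi. apply D_pow in Hi. subst. apply IH; auto.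
Qed.

Lemma gapp_ext_l : forall S S' C x, (forall z, S z <-> S' z) -> (gapp S C x <-> gapp S' C x).
Proof. intros. unfold gapp. split; intros [u [A1 A2]]; exists u; split; auto; apply H; auto. Qed.

Lemma D0_iff : forall (C : nat -> Prop), subset (D 0) C.
Proof. intros. apply D0. Qed.

Lemma step1 : forall n j, gapp Vs (it n) j <->
  (exists i, j = pair (pair (pair i 0) (2 ^ i)) 0) \/ (exists i, j = pair (pair (pair i (2 ^ i)) 0) (2 ^ n)).
Proof.
  intros n j. unfold gapp, Vs. split.
  - intros [u [[i [n' [H|H]]] Hs]]; apply pair_inj in H; destruct H; subst;
      assert (Hn : it n n') by (apply Hs; apply D_pow; auto); apply it_eq in Hn; subst; eauto.
  - intros [[i Hi]|[i Hi]]; exists (2 ^ n); split;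
      try (intros x Hx; apply D_pow in Hx; subst; apply it_eq; auto);
      exists i, n; subst; auto.
Qed.

Lemma step2 : forall (X : nat -> Prop) n m, gapp (gapp Vs (it n)) X m <->
  (exists i, m = pair (pair i 0) (2 ^ i)) \/ (X n /\ exists i, m = pair (pair i (2 ^ i)) 0).
Proof.
  intros X n m. rewrite (gapp_ext_l _ _ X m (step1 n)). unfold gapp. split.
  - intros [u [[[i H]|[i H]] Hs]]; apply pair_inj in H; destruct H; subst; eauto.
    right. split; [apply Hs; apply D_pow; auto| eauto].
  - intros [[i Hi]|[HX [i Hi]]].
    + exists 0. split; [left; exists i; subst; auto| apply D0].
    + exists (2 ^ n). split; [right; exists i; subst; auto|]. intros x Hx; apply D_pow in Hx; subst; auto.
Qed.

Lemma step3 : forall (X A : nat -> Prop) n j, gapp (gapp (gapp Vs (it n)) X) A j <->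
  (exists i, j = pair i 0 /\ A i) \/ (X n /\ exists i, j = pair i (2 ^ i)).
Proof.
  intros X A n j. rewrite (gapp_ext_l _ _ A j (step2 X n)). unfold gapp. split.
  - intros [u [[[i H]|[HX [i H]]] Hs]]; apply pair_inj in H; destruct H; subst; eauto.
    left. exists i. split; auto. apply Hs. apply D_pow; auto.
  - intros [[i [Hi HA]]|[HX [i Hi]]].
    + exists (2 ^ i). split; [left; exists i; subst; auto|]. intros x Hx; apply D_pow in Hx; subst; auto.
    + exists 0. split; [right; split; auto; exists i; subst; auto| apply D0].
Qed.

Lemma step4 : forall (X A B : nat -> Prop) n x, gapp (gapp (gapp (gapp Vs (it n)) X) A) B x <->
  A x \/ (X n /\ B x).
Proof.
  intros X A B n x. rewrite (gapp_ext_l _ _ B x (step3 X A n)). unfold gapp. split.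
  - intros [u [[[i [H HA]]|[HX [i H]]] Hs]]; apply pair_inj in H; destruct H; subst; auto.
    right. split; auto. apply Hs. apply D_pow; auto.
  - intros [HA|[HX HB]].
    + exists 0. split; [left; exists x; auto| apply D0].
    + exists (2 ^ x). split; [right; split; auto; exists x; auto|]. intros y Hy; apply D_pow in Hy; subst; auto.
Qed.

Lemma inG_it : forall X n, inG X (it n).
Proof.
  intros X n. induction n; simpl.
  - apply G_ce, ce_Zs.
  - apply (G_app X _ Scs (it n) (G_ce X _ ce_Scs) IHn). intros; reflexivity.
Qed.

Lemma inG_gapp : forall X P Q, inG X P -> inG X Q -> inG X (gapp P Q).
Proof. intros. apply (G_app X _ P Q H H0). intros; reflexivity. Qed.

Lemma f_it : forall X Y f, embedding X Y f -> forall n, f (it n) = itY (f Zs) (f Scs) n.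
Proof.
  intros X Y f [E1 [E2 E3]] n. induction n; simpl; auto.
  rewrite E3; [|apply G_ce, ce_Scs|apply inG_it]. rewrite IHn. reflexivity.
Qed.

Lemma enum_le_ext : forall (P Q Y : nat -> Prop), (forall x, P x <-> Q x) -> enum_le P Y -> enum_le Q Y.
Proof. intros P Q Y H [R [HR1 HR2]]. exists R. split; auto. intros x. rewrite <- H. auto. Qed.

Lemma hard_dir : forall X Y f, embedding X Y f -> ~ order_reversing X f -> enum_le X Y.
Proof.
  intros X Y f Hemb Hnor.
  assert (Hex : exists A B, inG X A /\ inG X B /\ subset A B /\ exists k0, f B k0 /\ ~ f A k0).
  { apply NNPP. intro Hc. apply Hnor. intros A B HA HB HAB k Hk. apply NNPP. intro Hk'.
    apply Hc. exists A, B. repeat split; auto. exists k; auto. }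
  destruct Hex as [A [B [HA [HB [HAB [k0 [Hk1 Hk2]]]]]]].
  destruct Hemb as [E1 [E2 E3]].
  set (Gn := fun n => gapp (gapp (gapp (gapp (f Vs) (itY (f Zs) (f Scs) n)) (f X)) (f A)) (f B)).
  assert (HX : inG X X) by (apply G_base; intros; reflexivity).
  assert (HV : inG X Vs) by (apply G_ce, ce_Vs).
  assert (Hf : forall n, f (gapp (gapp (gapp (gapp Vs (it n)) X) A) B) = Gn n).
  { intros n. unfold Gn. rewrite <- (f_it X Y f (conj E1 (conj E2 E3))).
    rewrite E3 by (repeat apply inG_gapp; auto; apply inG_it).
    rewrite E3 by (repeat apply inG_gapp; auto; apply inG_it).
    rewrite E3 by (repeat apply inG_gapp; auto; apply inG_it).
    rewrite E3 by (repeat apply inG_gapp; auto; apply inG_it). reflexivity. }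
  assert (Key : forall n, X n <-> Gn n k0).
  { intros n. rewrite <- Hf. destruct (classic (X n)) as [Xn|Xn].
    - replace (gapp (gapp (gapp (gapp Vs (it n)) X) A) B) with B; [tauto|].
      apply set_ext. intros x. rewrite step4. split; auto. intros [H|[_ H]]; auto.
    - replace (gapp (gapp (gapp (gapp Vs (it n)) X) A) B) with A; [tauto|].
      apply set_ext. intros x. rewrite step4. split; auto. intros [H|[H _]]; tauto. }
  assert (HS : SF Y 1 (fun p => Gn (hd 0 p))).
  { unfold Gn. repeat apply SF_gapp; try apply SF_const; try (apply L_inG; apply E1; auto).
    apply itY_S1; apply L_inG; apply E1; [apply G_ce, ce_Zs| apply G_ce, ce_Scs]. }
  unfold SF in HS.
  pose proof (S1_subst Y 2 1 _ [constE k0; EV 0] HS eq_refl) as HS2.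
  apply S1_enum in HS2. eapply enum_le_ext; [|exact HS2].
  intros x. simpl. rewrite den_const. rewrite Key. reflexivity.
Qed.

Theorem theorem7p10 (X Y : nat -> Prop) :
  (exists f : (nat -> Prop) -> (nat -> Prop),
      embedding X Y f /\ ~ order_reversing X f) <-> enum_le X Y.
Proof.
  split.
  - intros [f [H1 H2]]. exact (hard_dir X Y f H1 H2).
  - apply easy_dir.
Qed.
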